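(* Let $n,m\in\mathbb{N}$. (i) Let $\phi\in C(\mathbb{R};\mathbb{C})$ and $\varrho:\mathbb{C}\to\mathbb{C}$, $\varrho(z)=\phi(\mathrm{Re}(z))$. Then $\mathcal{NN}^\varrho_{n,m,2n-1}$ is not universal. (ii) Let $\varrho:\mathbb{C}\to\mathbb{R}$ (real-valued). Then $\mathcal{NN}^\varrho_{n,m,2m-1}$ is not universal.
   Context: For $\varrho:\mathbb{C}\to\mathbb{C}$ and $n,m,W\in\mathbb{N}$, $\mathcal{NN}^\varrho_{n,m,W}$ denotes the set of all functions $\mathbb{C}^n\to\mathbb{C}^m$ of the form $V_L\circ\varrho^{\times W}\circ V_{L-1}\circ\cdots\circ\varrho^{\times W}\circ V_1$ with arbitrary depth $L\ge 2$, where $V_1:\mathbb{C}^n\to\mathbb{C}^W$, $V_2,\dots,V_{L-1}:\mathbb{C}^W\to\mathbb{C}^W$, $V_L:\mathbb{C}^W\to\mathbb{C}^m$ are $\mathbb{C}$-affine maps ($z\mapsto Az+b$ with complex $A,b$) and $\varrho^{\times W}$ applies $\varrho$ componentwise. A class $\mathcal{F}$ of functions $\mathbb{C}^n\to\mathbb{C}^m$ is universal if for every $g\in C(\mathbb{C}^n;\mathbb{C}^m)$, compact $K\subseteq\mathbb{C}^n$ and $\varepsilon>0$ there is $f\in\mathcal{F}$ with $\sup_{z\in K}\|f(z)-g(z)\|<\varepsilon$. *)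

(* Defs.v *)
From HB Require Import structures.
From mathcomp Require Import all_boot all_order all_algebra.
From mathcomp Require Import all_classical all_reals topology normedtype.
From mathcomp Require Export complex.

Set Implicit Arguments.
Unset Strict Implicit.
Unset Printing Implicit Defensive.

Import Order.TTheory GRing.Theory Num.Theory.
Import numFieldNormedType.Exports.
Local Open Scope ring_scope.

(* The complex numbers R[i], packaged as a numClosedFieldType so that
   MathComp-Analysis equips them (and row vectors over them) with their
   standard topology / norm (modulus). *)
Definition Cx (R : rcfType) : numClosedFieldType := R[i].

(* C^k is represented by row vectors 'rV[Cx R]_k, with its canonical
   (max-norm) normed-space topology over R[i]. *)

(* Apply the layers: z |-> V_L (rho^W (V_{L-1} ( ... rho^W (V_1 z)))).
   [hs] lists the hidden affine maps V_2, ..., V_{L-1} (in order),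
   each as a pair (A, b) acting by x |-> x *m A + b. *)
Definition nn_eval (R : rcfType) (rho : Cx R -> Cx R) (n m W : nat)
  (A1 : 'M[Cx R]_(n, W)) (b1 : 'rV[Cx R]_W)
  (hs : seq ('M[Cx R]_(W, W) * 'rV[Cx R]_W))
  (AL : 'M[Cx R]_(W, m)) (bL : 'rV[Cx R]_m) (z : 'rV[Cx R]_n) : 'rV[Cx R]_m :=
  let y := foldl (fun x (p : 'M[Cx R]_(W, W) * 'rV[Cx R]_W) =>
                    map_mx rho x *m p.1 + p.2) (z *m A1 + b1) hs in
  map_mx rho y *m AL + bL.

(* The class NN^rho_{n,m,W} (arbitrary depth L >= 2, L = size hs + 2). *)
Definition NN (R : rcfType) (rho : Cx R -> Cx R) (n m W : nat)
  (f : 'rV[Cx R]_n -> 'rV[Cx R]_m) : Prop :=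
  exists A1 b1 hs AL bL, f = @nn_eval R rho n m W A1 b1 hs AL bL.

(* Universality of a class F of functions C^n -> C^m:
   sup_{z in K} ||f z - g z|| < eps, written as: there is d < eps bounding
   ||f z - g z|| on K. *)
Definition universal (R : realType) (n m : nat)
  (F : ('rV[Cx R]_n -> 'rV[Cx R]_m) -> Prop) : Prop :=
  forall g : 'rV[Cx R]_n -> 'rV[Cx R]_m, continuous g ->
  forall K : set 'rV[Cx R]_n, compact K ->
  forall eps : R, 0 < eps ->
  exists f, F f /\ exists d : R, d < eps /\
    forall z, K z -> `|f z - g z| <= ((d%:C)%C : Cx R).

Arguments nn_eval {R} rho n m W A1 b1 hs AL bL z.
Arguments NN {R} rho n m W f.
Arguments universal {R} n m F.

(* Main.v *)
Require Import Defs.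
From HB Require Import structures.
From mathcomp Require Import all_boot all_order all_algebra.
From mathcomp Require Import all_classical all_reals topology normedtype.
From mathcomp Require Import complex interval_inference.
Import Order.TTheory GRing.Theory Num.Theory.
Import numFieldNormedType.Exports.
Local Open Scope ring_scope.

Lemma entry_le_norm (K : numDomainType) (a b : nat) (x : 'M[K]_(a, b)) i j :
  `|x i j| <= `|x|.
Proof.
rewrite [leRHS]/Num.Def.normr /= mx_normE -[leLHS]nngE num_le.
exact: (le_bigmax _ _ (i, j)).
Qed.
Arguments entry_le_norm {K a b} x i j.

Lemma ker_exists (F : fieldType) p q (N : 'M[F]_(p, q)) : (q < p)%N ->
  exists w : 'rV[F]_p, w != 0 /\ w *m N = 0.
Proof.
move=> qp.
have : \rank (kermx N) != 0%N.
  rewrite mxrank_ker subn_eq0 -ltnNge.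
  exact: leq_ltn_trans (rank_leq_col N) qp.
rewrite mxrank_eq0 => /eqP kN.
have [i wi] : exists i, row i (kermx N) != 0.
  apply/existsP; rewrite -negb_forall; apply/negP => /forallP H.
  by apply: kN; apply/row_matrixP => i; rewrite row0; apply/eqP.
by exists (row i (kermx N)); split => //; rewrite -row_mul mulmx_ker row0.
Qed.

Lemma normalize (R : realFieldType) (p : nat) (w : 'rV[R]_p) : w != 0 ->
  exists k : R, 0 < k /\ (forall j, `|k * w 0 j| <= 1) /\
    exists j, `|k * w 0 j| = 1.
Proof.
move=> w0.
have np : 0 < `|w| by rewrite normr_gt0.
exists (`|w|^-1); split; first by rewrite invr_gt0.
have [ij Hij] := mx_norm_neq0 (lt0r_neq0 np).
split.
  move=> j; rewrite normrM ger0_norm ?invr_ge0 ?normr_ge0 //.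
  by rewrite mulrC ler_pdivrMr // mul1r entry_le_norm.
exists ij.2; rewrite normrM ger0_norm ?invr_ge0 ?normr_ge0 //.
have -> : (0 : 'I_1) = ij.1 by rewrite [ij.1]ord1.
by rewrite -[X in `|w|^-1 * X = _]Hij mulVf // lt0r_neq0.
Qed.

Section S.
Variable R : realType.
Local Notation C := (Cx R).
Local Open Scope complex_scope.

Lemma normC_real (a : R) : `|(a%:C : C)| = (`|a|)%:C.
Proof. by rewrite normc_def /= expr0n /= addr0 sqrtr_sqr. Qed.

Lemma gt0C (e : C) : 0 < e -> e = (complex.Re e)%:C /\ 0 < complex.Re e.
Proof. rewrite /Cx in e *; destruct e as [a b]; rewrite ltcE /= => /andP[/eqP b0 ha]. by rewrite b0. Qed.

Lemma emb_cont : continuous (fun a : R => (a%:C : C)).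
Proof.
move=> x; apply/cvgrPdist_lt => e /gt0C [-> e0].
near=> t.
rewrite -rmorphB normC_real ltcR.
near: t.
by move: e0; apply/(cvgrPdist_lt _ _).1; apply: cvg_id.
Unshelve. all: by end_near.
Qed.

Lemma ReD (x y : C) : complex.Re (x + y) = complex.Re x + complex.Re y.
Proof. rewrite /Cx in x y *; destruct x; destruct y; by []. Qed.

Lemma ReSum k (F : 'I_k -> C) : complex.Re (\sum_(i < k) F i) = \sum_(i < k) complex.Re (F i).
Proof.
elim: k F => [|k IH] F; first by rewrite !big_ord0.
by rewrite !big_ord_recr /= ReD IH.
Qed.

Lemma Re_mul (a b : R) (z : C) :
  complex.Re ((a%:C + 'i * b%:C) * z) = a * complex.Re z - b * complex.Im z.
Proof. rewrite /Cx in z *; destruct z as [x y]; by rewrite /= !(mul0r, mul1r, mulr0, subr0, addr0, add0r). Qed.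

Lemma ReImh (a b : R) : complex.Re (a%:C + 'i * b%:C : C) = a /\ complex.Im (a%:C + 'i * b%:C : C) = b.
Proof. by rewrite /= !(mul0r, mul1r, mulr0, subr0, addr0, add0r). Qed.


Lemma normC_ge (a b : R) : (`|a|)%:C <= `|(a%:C + 'i * b%:C : C)| /\ (`|b|)%:C <= `|(a%:C + 'i * b%:C : C)|.
Proof.
rewrite normc_def; have [-> ->] := ReImh a b.
rewrite !lecR -!sqrtr_sqr; split; apply: ler_wsqrtr.
  by rewrite lerDl sqr_ge0.
by rewrite lerDr sqr_ge0.
Qed.

Lemma nn_eq (rho : C -> C) n m W A1 b1 hs AL bL (z z' : 'rV[C]_n) :
  map_mx rho (z *m A1 + b1) = map_mx rho (z' *m A1 + b1) ->
  nn_eval rho n m W A1 b1 hs AL bL z = nn_eval rho n m W A1 b1 hs AL bL z'.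
Proof. rewrite /nn_eval; case: hs => [|p hs] /= E; by rewrite E. Qed.

Definition hC (p : R * R) : C := p.1%:C + 'i * p.2%:C.

Lemma hC_cont : continuous hC.
Proof.
move=> p; rewrite /hC; apply: cvgD.
  apply: (continuous_comp (f := fst)); [exact: cvg_fst | exact: emb_cont].
apply: cvgM; first exact: cvg_cst.
apply: (continuous_comp (f := snd)); [exact: cvg_snd | exact: emb_cont].
Qed.

Definition S1 : set C := hC @` (`[-1, 1]%classic `*` `[-1, 1]%classic).

Definition K1 n : set 'rV[C]_n := [set v | forall i, S1 (v ord0 i)].

Lemma K1_compact n : compact (K1 n).
Proof.
have := @rV_compact _ n (fun=> S1). rewrite /K1. move=> H; apply: H => _.
apply: continuous_compact; first by apply: continuous_subspaceT; exact: hC_cont.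
by apply: compact_setX; exact: segment_compact.
Qed.

Lemma part1 n m (n_gt0 : (0 < n)%N) (m_gt0 : (0 < m)%N) (phi : R -> C) :
  ~ universal n m (NN (fun z : C => phi (complex.Re z)) n m (2 * n - 1)).
Proof.
move=> Hu.
pose g1 := fun z : 'rV[C]_n => `|z| *: (const_mx 1 : 'rV[C]_m).
have g1c : continuous g1 by move=> z; apply: continuousZr_tmp; exact: norm_continuous.
have half : (0 : R) < 1 / 2 by rewrite divr_gt0 ?ltr0n.
have [f [[A1 [b1 [hs [AL [bL ->]]]]] [d [dlt Hd]]]] := Hu g1 g1c (K1 n) (K1_compact n) (1/2) half.
pose N := col_mx (map_mx (fun x : C => complex.Re x) A1) (map_mx (fun x : C => - complex.Im x) A1) : 'M[R]_(n + n, 2 * n - 1).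
have [w [w0 wN]] : exists w : 'rV[R]_(n + n), w != 0 /\ w *m N = 0.
  apply: ker_exists; by rewrite mul2n -addnn ltn_subrL /= addn_gt0 n_gt0.
have [k [k0 [kle [j0 kj0]]]] := @normalize _ _ w w0.
pose w' := k *: w.
have w'N : w' *m N = 0 by rewrite -scalemxAl wN scaler0.
pose a := fun i => (w' 0 (lshift n i) : R); pose b := fun i => (w' 0 (rshift n i) : R).
have able i : `|a i| <= 1 /\ `|b i| <= 1 by rewrite /a /b !mxE !kle.
pose v := \row_i ((a i)%:C + 'i * (b i)%:C) : 'rV[C]_n.
have vK : K1 n v.
  move=> i; exists (a i, b i); last by rewrite mxE.
  have [ha hb] := able i.
  by split; rewrite /= in_itv /= -ler_norml.
have fv : nn_eval (fun z : C => phi (complex.Re z)) n m (2 * n - 1) A1 b1 hs AL bL v =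
          nn_eval (fun z : C => phi (complex.Re z)) n m (2 * n - 1) A1 b1 hs AL bL 0.
  apply: nn_eq; rewrite mul0mx add0r; apply/matrixP => i j; rewrite !mxE ReD ReSum.
  congr phi.
  have E : (w' *m N) 0 j = 0 by rewrite w'N mxE.
  move: E; rewrite -[w' in w' *m N]hsubmxK mul_row_col !mxE.
  move=> E; rewrite -[X in _ = X]add0r; congr (_ + _).
  rewrite (eq_bigr (fun k' => a k' * complex.Re (A1 k' j) - b k' * complex.Im (A1 k' j))); last first.
    by move=> k' _; rewrite mxE Re_mul.
  rewrite -[RHS]E -big_split /=; apply: eq_bigr => k' _.
  by rewrite !mxE mulrN /a /b /w' !mxE.
have [i0 hi0] : exists i0, `|a i0| = 1 \/ `|b i0| = 1.
  case: (splitP j0) => i0 e; exists i0; [left|right]; rewrite /a /b /w' mxE.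
    by have -> : lshift n i0 = j0 by apply/val_inj; rewrite /= e.
  by have -> : rshift n i0 = j0 by apply/val_inj; rewrite /= e.
have vnorm : 1 <= `|v|.
  apply: le_trans _ (entry_le_norm v 0 i0); rewrite mxE.
  by have [h1 h2] := normC_ge (a i0) (b i0); case: hi0 => e; [move: h1|move: h2]; rewrite e.
have cnorm : 1 <= `|(const_mx 1 : 'rV[C]_m)|.
  by apply: le_trans _ (entry_le_norm _ 0 (Ordinal m_gt0)); rewrite mxE normr1.
have g1v : 1 <= `|g1 v| by rewrite /g1 normrZ normr_id; apply: mulr_ege1.
have g10 : g1 0 = 0 by rewrite /g1 normr0 scale0r.
have K10 : K1 n 0.
  move=> i; exists (0, 0); last by rewrite /hC mxE /= mulr0 addr0.
  by split; rewrite /= in_itv /= lerN10 ler01.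
have H1 := Hd v vK; have H2 := Hd 0 K10.
rewrite fv in H1.
set y := nn_eval _ _ _ _ _ _ _ _ _ 0 in H1 H2.
have Hs : `|g1 v| <= (d + d)%:C.
  have -> : g1 v = (g1 v - y) + (y - g1 0) by rewrite g10 subr0 subrK.
  rewrite rmorphD; apply: le_trans (ler_normD _ _) _.
  rewrite distrC; exact: lerD H1 H2.
have := le_trans g1v Hs.
have -> : (1 : C) = (1 : R)%:C by [].
rewrite lecR => h.
have := ltrD dlt dlt; rewrite -splitr => h'.
by move: (le_lt_trans h h'); rewrite ltxx.
Qed.

Lemma ImD (x y : C) : complex.Im (x + y) = complex.Im x + complex.Im y.
Proof. rewrite /Cx in x y *; destruct x; destruct y; by []. Qed.

Lemma ReB (x y : C) : complex.Re (x - y) = complex.Re x - complex.Re y.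
Proof. rewrite /Cx in x y *; destruct x; destruct y; by []. Qed.

Lemma ImB (x y : C) : complex.Im (x - y) = complex.Im x - complex.Im y.
Proof. rewrite /Cx in x y *; destruct x; destruct y; by []. Qed.

Lemma ImSum k (F : 'I_k -> C) : complex.Im (\sum_(i < k) F i) = \sum_(i < k) complex.Im (F i).
Proof.
elim: k F => [|k IH] F; first by rewrite !big_ord0.
by rewrite !big_ord_recr /= ImD IH.
Qed.

Lemma ReMr (a : R) (z : C) : complex.Re (a%:C * z) = a * complex.Re z.
Proof. rewrite /Cx in z *; destruct z as [x y]; by rewrite /= !(mul0r, mul1r, mulr0, subr0, addr0, add0r). Qed.

Lemma ImMr (a : R) (z : C) : complex.Im (a%:C * z) = a * complex.Im z.
Proof. rewrite /Cx in z *; destruct z as [x y]; by rewrite /= !(mul0r, mul1r, mulr0, subr0, addr0, add0r). Qed.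

Lemma ReIm_le (z : C) : (`|complex.Re z|)%:C <= `|z| /\ (`|complex.Im z|)%:C <= `|z|.
Proof.
rewrite normc_def !lecR -!sqrtr_sqr; split; apply: ler_wsqrtr.
  by rewrite lerDl sqr_ge0.
by rewrite lerDr sqr_ge0.
Qed.

Definition Rl m (x : 'rV[C]_m) : 'rV[R]_(m + m) :=
  row_mx (map_mx (fun z : C => complex.Re z) x) (map_mx (fun z : C => complex.Im z) x).

Definition N2 W m (A : 'M[C]_(W, m)) : 'M[R]_(W, m + m) :=
  row_mx (map_mx (fun z : C => complex.Re z) A) (map_mx (fun z : C => complex.Im z) A).

Definition Cf m (y : 'rV[R]_(m + m)) : 'rV[C]_m :=
  \row_i ((y 0 (lshift m i))%:C + 'i * (y 0 (rshift m i))%:C).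
Arguments Rl {m}. Arguments N2 {W m}. Arguments Cf {m}.

Lemma RlD m (x y : 'rV[C]_m) : Rl (x + y) = Rl x + Rl y.
Proof.
rewrite /Rl add_row_mx; congr row_mx; apply/matrixP => i j; by rewrite !mxE ?ReD ?ImD.
Qed.

Lemma RlB m (x y : 'rV[C]_m) : Rl (x - y) = Rl x - Rl y.
Proof.
rewrite /Rl opp_row_mx add_row_mx; congr row_mx; apply/matrixP => i j; by rewrite !mxE ?ReB ?ImB.
Qed.

Lemma Rl0 m : Rl (0 : 'rV[C]_m) = 0.
Proof. by rewrite -(subrr (0 : 'rV[C]_m)) RlB subrr. Qed.

Lemma RlM W m (r : 'rV[R]_W) (A : 'M[C]_(W, m)) :
  Rl (map_mx (fun x => (x%:C : C)) r *m A) = r *m N2 A.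
Proof.
rewrite /Rl /N2 mul_mx_row; congr row_mx; apply/matrixP => i j; rewrite !mxE.
  by rewrite ReSum; apply: eq_bigr => k _; rewrite !mxE ReMr.
by rewrite ImSum; apply: eq_bigr => k _; rewrite !mxE ImMr.
Qed.

Lemma RlCf m (y : 'rV[R]_(m + m)) : Rl (Cf y) = y.
Proof.
rewrite -[RHS]hsubmxK /Rl; congr row_mx; apply/matrixP => i j; rewrite (ord1 i) !mxE;
  by have [h1 h2] := ReImh (y 0 (lshift m j)) (y 0 (rshift m j)); rewrite ?h1 ?h2.
Qed.

Lemma cont_sum (T : topologicalType) (I : Type) (s : seq I) (P : pred I) k
  (F : I -> T -> 'rV[C]_k) :
  (forall i, continuous (F i)) -> continuous (fun x => \sum_(i <- s | P i) F i x).
Proof.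
move=> Fc; elim: s => [|i s IH] x.
  under eq_fun do rewrite big_nil. exact: cvg_cst.
under eq_fun do rewrite big_cons.
case: (P i); last exact: IH.
by apply: cvgD; [exact: Fc | exact: IH].
Qed.

Lemma cont_prod (T : topologicalType) (I : Type) (s : seq I) (P : pred I)
  (F : I -> T -> C) :
  (forall i, continuous (F i)) -> continuous (fun x => \prod_(i <- s | P i) F i x).
Proof.
move=> Fc; elim: s => [|i s IH] x.
  under eq_fun do rewrite big_nil. exact: cvg_cst.
under eq_fun do rewrite big_cons.
case: (P i); last exact: IH.
by apply: cvgM; [exact: Fc | exact: IH].
Qed.

Definition Lag (N s : nat) (w : C) : C :=
  \prod_(t < N | (t : nat) != s) ((w - t%:R) / (s%:R - t%:R)).

Lemma Lag_cont N s : continuous (Lag N s).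
Proof.
apply: cont_prod => t x.
apply: (continuousM (s := fun w : C => w - t%:R) (t := fun=> (s%:R - t%:R)^-1)).
  apply: (continuousB (f := fun w : C => w) (g := fun=> t%:R)); first exact: cvg_id.
  exact: cst_continuous.
exact: cst_continuous.
Qed.

Lemma Lag_eval N s t : (t < N)%N -> Lag N s t%:R = (s == t)%:R.
Proof.
move=> tN; case: (eqVneq s t) => [<-|st].
  rewrite /Lag big1 // => t' ht'.
  by rewrite divff // subr_eq0 eqr_nat eq_sym.
rewrite /Lag (bigD1 (Ordinal tN)) /=; last by rewrite eq_sym.
by rewrite subrr !mul0r.
Qed.

Definition G k N (tg : nat -> 'rV[C]_k) (w : C) : 'rV[C]_k :=
  \sum_(s < N) Lag N s w *: tg s.
Arguments G {k}.

Lemma G_cont k N tg : continuous (@G k N tg).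
Proof.
apply: cont_sum => s x; apply: continuousZr_tmp; exact: Lag_cont.
Qed.

Lemma G_eval k N tg t : (t < N)%N -> @G k N tg t%:R = tg t.
Proof.
move=> tN; rewrite /G (bigD1 (Ordinal tN)) //= Lag_eval // eqxx scale1r.
rewrite big1 ?addr0 // => s' hs.
move: hs; rewrite -val_eqE /= => /negbTE hs.
by rewrite Lag_eval // hs scale0r.
Qed.

Lemma part2 n m (n_gt0 : (0 < n)%N) (m_gt0 : (0 < m)%N) (rho : C -> R) :
  ~ universal n m (NN (fun z : C => ((rho z)%:C)%C : C) n m (2 * m - 1)).
Proof.
move=> Hu.
pose i0 : 'I_n := Ordinal n_gt0.
pose Np := (m + m).+1.
pose tg := fun s : nat => match s with 0 => 0 | s'.+1 => Cf (\row_(j < m + m) ((j : nat) == s')%:R) end : 'rV[C]_m.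
pose g2 := fun z : 'rV[C]_n => G Np tg (z 0 i0).
have g2c : continuous g2.
  move=> z; apply: (continuous_comp (f := fun z : 'rV[C]_n => z 0 i0) (g := G Np tg)).
    exact: coord_continuous.
  exact: G_cont.
pose p := fun s : nat => (const_mx s%:R : 'rV[C]_n).
pose K2 := \big[setU/set0]_(s < Np) [set p s]%classic.
have K2c : compact K2 by apply: bigsetU_compact => s _; exact: compact_set1.
have pK s : (s < Np)%N -> K2 (p s).
  by move=> sN; rewrite /K2 (bigD1 (Ordinal sN)) //=; left.
have g2p s : (s < Np)%N -> g2 (p s) = tg s by move=> sN; rewrite /g2 /p mxE G_eval.
pose eps : R := (((m + m) * 2)%:R)^-1.
have eps0 : 0 < eps by rewrite invr_gt0 ltr0n muln_gt0 addn_gt0 m_gt0.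
have [f [[A1 [b1 [hs [AL [bL ->]]]]] [d [dlt Hd]]]] := Hu g2 g2c K2 K2c eps eps0.
have [w [w0 wN]] : exists w : 'rV[R]_(m + m), w != 0 /\ w *m (N2 AL)^T = 0.
  apply: ker_exists; by rewrite mul2n -addnn ltn_subrL /= addn_gt0 m_gt0.
have [k [k0 [kle [j0 kj0]]]] := @normalize _ _ w w0.
pose w' := k *: w.
have w'N : N2 AL *m w'^T = 0.
  by rewrite -[N2 AL]trmxK -trmx_mul /w' -scalemxAl wN scaler0 trmx0.
pose ell := fun x : 'rV[C]_m => ((Rl x *m w'^T) 0 0 : R).
have ellB x y : ell (x - y) = ell x - ell y by rewrite /ell RlB mulmxBl !mxE.
have ellf z : ell (nn_eval (fun z0 : C => (rho z0)%:C) n m (2 * m - 1) A1 b1 hs AL bL z) = ell bL.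
  rewrite /ell /nn_eval. set yy := foldl _ _ _.
  have -> : map_mx (fun z => ((rho z)%:C : C)) yy = map_mx (fun x => (x%:C : C)) (map_mx rho yy).
    by apply/matrixP => i j; rewrite !mxE.
  by rewrite RlD RlM mulmxDl -mulmxA w'N mulmx0 add0r.
have ellbound x : `|x| <= d%:C -> `|ell x| <= d *+ (m + m).
  move=> hx; rewrite /ell mxE; apply: le_trans (ler_norm_sum _ _ _) _.
  apply: le_trans (_ : \sum_(j < m + m) d <= _); last by rewrite sumr_const card_ord.
  apply: ler_sum => j _; rewrite mxE normrM.
  have hw : `|w'^T j 0| <= 1 by rewrite !mxE kle.
  have hr : `|Rl x 0 j| <= d.
    rewrite /Rl mxE; case: (fintype.split j) => i /=; rewrite mxE.
      have [h1 _] := ReIm_le (x 0 i); rewrite -lecR.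
      exact: le_trans h1 (le_trans (entry_le_norm x 0 i) hx).
    have [_ h1] := ReIm_le (x 0 i); rewrite -lecR.
    exact: le_trans h1 (le_trans (entry_le_norm x 0 i) hx).
  rewrite -[d]mulr1; apply: ler_pM => //. move: hr. rewrite /Rl mxE. by [].
have ell0 : ell (tg 0) = 0 by rewrite /ell /= Rl0 mul0mx mxE.
have ell1 : ell (tg j0.+1) = w' 0 j0.
  rewrite /ell /= RlCf.
  have -> : \row_(j < m + m) ((j : nat) == j0)%:R = delta_mx (0 : 'I_1) j0 :> 'rV[R]_(m + m).
    by apply/matrixP => i j; rewrite !mxE (ord1 i) eqxx.
  by rewrite -rowE !mxE.
have jN : (j0.+1 < Np)%N by rewrite ltnS ltn_ord.
have Hq := Hd (p j0.+1) (pK _ jN).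
have Hp := Hd (p 0) (pK 0 (ltn0Sn _)).
rewrite g2p // in Hq; rewrite g2p // in Hp.
have Bq := ellbound _ Hq; have Bp := ellbound _ Hp.
rewrite !ellB in Bq Bp. have e1 := ellf (p j0.+1). have e0 := ellf (p 0). rewrite e1 in Bq. rewrite e0 in Bp. rewrite ell1 in Bq. rewrite ell0 subr0 in Bp.
have w1 : `|w' 0 j0| = 1 by rewrite mxE.
have H1 : 1 <= d *+ (m + m) + d *+ (m + m).
  rewrite -w1.
  have -> : w' 0 j0 = ell bL - (ell bL - w' 0 j0) by rewrite opprB addrC subrK.
  by apply: le_trans (ler_normB _ _) _; apply: lerD.
have H2 : d *+ (m + m) + d *+ (m + m) < 1.
  have -> : d *+ (m + m) + d *+ (m + m) = d * ((m + m) * 2)%:R.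
    by rewrite -mulr2n -mulrnA mulr_natr.
  have epsE : eps * ((m + m) * 2)%:R = 1 by rewrite mulVf // pnatr_eq0 -lt0n muln_gt0 addn_gt0 m_gt0.
  rewrite -[X in _ < X]epsE ltr_pM2r //; by rewrite ltr0n muln_gt0 addn_gt0 m_gt0.
by move: (le_lt_trans H1 H2); rewrite ltxx.
Qed.
End S.

Theorem theorem6p4 (R : realType) (n m : nat) (n_gt0 : (0 < n)%N) (m_gt0 : (0 < m)%N) :
  (forall phi : R -> Cx R, continuous phi ->
     ~ universal n m (NN (fun z : Cx R => phi (complex.Re z)) n m (2 * n - 1)))
  /\
  (forall rho : Cx R -> R,
     ~ universal n m (NN (fun z : Cx R => ((rho z)%:C)%C : Cx R) n m (2 * m - 1))).
Proof.
split.
  by move=> phi _; exact: (@part1 R n m n_gt0 m_gt0 phi).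
by move=> rho; exact: (@part2 R n m n_gt0 m_gt0 rho).
Qed.
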